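(* Let $G$ be a graph and $S\subseteq V(G)$. Let $H$ be a graph with $\partial(S)\subseteq V(H)$ and $V(H)\cap(V(G)\setminus S)=\emptyset$ such that $B_{G[S]}(\partial(S))=B_H(\partial(S))$, and let $G'$ be the graph obtained from $G$ by replacing $G[S]$ with $H$ (that is, $V(G')=(V(G)\setminus S)\cup V(H)$ and $E(G')$ consists of the edges of $G$ not having both endpoints in $S$ together with $E(H)$). Then for any proper $2$-coloring $K$ of $G$, the restriction $K|_{(V(G)\setminus S)\cup\partial(S)}$ can be extended to a proper $2$-coloring of $G'$, and for any proper $2$-coloring $K'$ of $G'$, the restriction $K'|_{(V(G)\setminus S)\cup\partial(S)}$ can be extended to a proper $2$-coloring of $G$.
   Context: $\partial(S)$ is the set of vertices of $S$ having at least one neighbor in $V(G)\setminus S$. For a graph $X$ and $T\subseteq V(X)$, $B_X(T)$ is the set of subsets $T'\subseteq T$ such that there is a bipartition of $X$ (proper $2$-coloring) with all of $T'$ in one part and all of $T\setminus T'$ in the other; $B_X(T)=\emptyset$ if $X$ is not bipartite. *)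

(* Defs.v *)
From mathcomp Require Import all_boot.
Set Implicit Arguments. Unset Strict Implicit. Unset Printing Implicit Defensive.

Record sgraph (U : finType) := SGraph {
  verts : {set U};
  adj : rel U;
  adj_sym : symmetric adj;
  adj_irr : irreflexive adj;
  adj_verts : forall x y, adj x y -> (x \in verts) && (y \in verts)
}.

Section Defs.
Variable U : finType.

Definition proper2 (e : rel U) (c : U -> bool) : Prop :=
  forall x y, e x y -> c x != c y.

Definition boundary (G : sgraph U) (S : {set U}) : {set U} :=
  [set x in S | [exists y, adj G x y && (y \notin S)]].

Definition induced_adj (G : sgraph U) (S : {set U}) : rel U :=
  fun x y => [&& adj G x y, x \in S & y \in S].

(* T' \in B_X(T), for X given by its edge relation e:
   some proper 2-colouring puts T' in one part and T \ T' in the other. *)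
Definition inB (e : rel U) (T T' : {set U}) : Prop :=
  T' \subset T /\
  exists c : U -> bool, proper2 e c /\
    (forall x, x \in T' -> c x = true) /\
    (forall x, x \in T :\: T' -> c x = false).

Definition replace_verts (G H : sgraph U) (S : {set U}) : {set U} :=
  (verts G :\: S) :|: verts H.
Definition replace_adj (G H : sgraph U) (S : {set U}) : rel U :=
  fun x y => (adj G x y && ~~ ((x \in S) && (y \in S))) || adj H x y.

End Defs.

(* Main.v *)
Require Import Defs.
From mathcomp Require Import all_boot.

Lemma inB_of (U : finType) (e : rel U) (T : {set U}) (K : U -> bool) :
  proper2 e K -> inB e T [set x in T | K x].
Proof.
move=> pK; split; first by apply/subsetP=> x; rewrite inE => /andP[].
exists K; split=> //; split=> x; first by rewrite inE => /andP[].
by rewrite !inE => /andP[/negP H1 H2]; apply/negbTE/negP => H3; apply: H1; rewrite H2.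
Qed.

Lemma inB_to (U : finType) (e : rel U) (T : {set U}) (K : U -> bool) :
  inB e T [set x in T | K x] ->
  exists c, proper2 e c /\ forall x, x \in T -> c x = K x.
Proof.
move=> [_ [c [pc [h1 h2]]]]; exists c; split=> // x xT.
case Kx: (K x).
  by apply: h1; rewrite inE xT Kx.
by apply: h2; rewrite !inE xT Kx.
Qed.

Theorem lemma5p5 (U : finType) (G H : sgraph U) (S : {set U}) :
  S \subset verts G ->
  boundary G S \subset verts H ->
  [disjoint verts H & verts G :\: S] ->
  (forall T' : {set U},
     inB (induced_adj G S) (boundary G S) T' <-> inB (adj H) (boundary G S) T') ->
  (forall K : U -> bool, proper2 (adj G) K ->
     exists K' : U -> bool, proper2 (replace_adj G H S) K' /\
       (forall x, x \in (verts G :\: S) :|: boundary G S -> K' x = K x)) /\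
  (forall K' : U -> bool, proper2 (replace_adj G H S) K' ->
     exists K : U -> bool, proper2 (adj G) K /\
       (forall x, x \in (verts G :\: S) :|: boundary G S -> K x = K' x)).
Proof.
move=> sSG bH dis eqB.
have bd : forall x y, adj G x y -> x \in S -> y \notin S -> x \in boundary G S.
  by move=> x y xy xS yS; rewrite inE xS /=; apply/existsP; exists y; rewrite xy.
have HS : forall x, x \in verts H -> x \in verts G -> x \in S.
  move=> x xH xG; case xS: (x \in S) => //.
  by move: (disjointFr dis xH); rewrite !inE xS xG.
split.
- move=> K pK.
  have pK1 : proper2 (induced_adj G S) K.
    by move=> x y /and3P[xy _ _]; apply: pK.
  have [c [pc hc]] := inB_to _ _ _ _ ((eqB _).1 (inB_of _ _ (boundary G S) _ pK1)).
  exists (fun x => if x \in verts H then c x else K x); split.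
  + move=> x y /orP[/andP[xy nS]|xy].
      have /andP[xG yG] := adj_verts xy.
      case: ifP => xH; case: ifP => yH.
      * by rewrite (HS x xH xG) (HS y yH yG) in nS.
      * have xS := HS x xH xG.
        have yS : y \notin S by apply/negP=> yS; rewrite xS yS in nS.
        by rewrite hc ?(bd x y) //; apply: pK.
      * have yS := HS y yH yG.
        have xS : x \notin S by apply/negP=> xS; rewrite xS yS in nS.
        rewrite (hc y) ?(bd y x) //; first by apply: pK.
        by rewrite adj_sym.
      * by apply: pK.
    have /andP[xH yH] := adj_verts xy.
    by rewrite xH yH; apply: pc.
  + move=> x; rewrite inE => /orP[xD|xB].
      case: ifP => // xH.
      by rewrite (disjointFr dis xH) in xD.
    by rewrite (subsetP bH x xB) hc.
- move=> K' pK'.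
  have pK1 : proper2 (adj H) K' by move=> x y xy; apply: pK'; rewrite /replace_adj xy orbT.
  have [c [pc hc]] := inB_to _ _ _ _ ((eqB _).2 (inB_of _ _ (boundary G S) _ pK1)).
  exists (fun x => if x \in S then c x else K' x); split.
  + move=> x y xy.
    have rep : ~~ ((x \in S) && (y \in S)) -> K' x != K' y.
      by move=> nS; apply: pK'; rewrite /replace_adj xy nS.
    case: ifP => xS; case: ifP => yS.
    * by apply: pc; rewrite /induced_adj xy xS yS.
    * by rewrite hc ?(bd x y) ?yS //; apply: rep; rewrite yS andbF.
    * rewrite (hc y) ?(bd y x) ?xS //; last by rewrite adj_sym.
      by apply: rep; rewrite xS.
    * by apply: rep; rewrite xS.
  + move=> x; rewrite inE => /orP[xD|xB].
      by move: xD; rewrite inE => /andP[/negbTE -> _].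
    have := xB; rewrite inE => /andP[-> _].
    by rewrite hc.
Qed.
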